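(* Let $n\ge 1$ and let $\mathcal{I}$ be an interval hypergraph on $[n]$ containing all singletons $\{i\}$, $i\in[n]$. Then the hypergraphic poset $P_{\mathcal{I}}$ is a lattice if and only if $\mathcal{I}$ is closed under intersection, i.e. $I,J\in\mathcal{I}$ and $I\cap J\neq\varnothing$ imply $I\cap J\in\mathcal{I}$.
   Context: A hypergraph $\mathcal{H}$ on $[n]=\{1,\dots,n\}$ is a collection of subsets of $[n]$; by convention it contains all singletons. An interval hypergraph is a hypergraph all of whose members are intervals $[i,j]=\{i,i+1,\dots,j\}$. An orientation of $\mathcal{H}$ is a map $O:\mathcal{H}\to[n]$ with $O(H)\in H$ for all $H$. It is acyclic if there are no $H_1,\dots,H_k\in\mathcal{H}$, $k\ge2$, with $O(H_{i+1})\in H_i\setminus\{O(H_i)\}$ for $i\in[k-1]$ and $O(H_1)\in H_k\setminus\{O(H_k)\}$. Two orientations $O\neq O'$ are related by an increasing flip (from $O$ to $O'$) if there exist $1\le i<j\le n$ such that for all $H\in\mathcal{H}$: if $O(H)\ne O'(H)$ then $O(H)=i$ and $O'(H)=j$; and if $\{i,j\}\subseteq H$ then $O(H)=i\iff O'(H)=j$. The hypergraphic poset $P_{\mathcal{H}}$ is the transitive closure of the increasing flip relation on the set of acyclic orientations of $\mathcal{H}$ (equivalently, the transitive closure of the graph of the polytope $\sum_{H\in\mathcal{H}}\mathrm{conv}\{e_h:h\in H\}$ oriented in the direction $(n-1,n-3,\dots,1-n)$). *)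

(* Defs.v *)
(* Vertices [n] = {1..n} are modelled by 'I_n = {0..n-1}. *)
From mathcomp Require Import all_boot.
From Stdlib Require Import Relations.
Set Implicit Arguments. Unset Strict Implicit. Unset Printing Implicit Defensive.

Section Hyper.
Variable n : nat.

Definition hypergraph := {set {set 'I_n}}.

Definition interval (i j : 'I_n) : {set 'I_n} := [set x : 'I_n | (i <= x <= j)%N].

Definition contains_singletons (HH : hypergraph) : Prop :=
  forall i : 'I_n, [set i] \in HH.

Definition interval_hypergraph (HH : hypergraph) : Prop :=
  forall H, H \in HH -> exists i j : 'I_n, (i <= j)%N /\ H = interval i j.

Definition closed_under_intersection (HH : hypergraph) : Prop :=
  forall I J, I \in HH -> J \in HH -> I :&: J != set0 -> I :&: J \in HH.

(* Orientations: maps O on members H of HH with O(H) in H; encoded as a finite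
   function on all subsets, equal to None outside HH (so that equality of
   orientations is equality of maps on HH). *)
Definition orient := {ffun {set 'I_n} -> option 'I_n}.

Definition is_orientation (HH : hypergraph) (O : orient) : Prop :=
  forall H, (H \in HH -> exists v, O H = Some v /\ v \in H) /\
            (H \notin HH -> O H = None).

Definition has_cycle (HH : hypergraph) (O : orient) : Prop :=
  exists (k : nat) (f : nat -> {set 'I_n}),
    (2 <= k)%N /\ (forall t, (t < k)%N -> f t \in HH) /\
    (forall t, (t < k)%N -> exists v,
        O (f ((t.+1) %% k)) = Some v /\ v \in f t /\ O (f t) <> Some v).

Definition acyclic_orientation (HH : hypergraph) (O : orient) : Prop :=
  is_orientation HH O /\ ~ has_cycle HH O.

Definition increasing_flip (HH : hypergraph) (O O' : orient) : Prop :=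
  O <> O' /\
  exists i j : 'I_n, (i < j)%N /\
    forall H, H \in HH ->
      (O H <> O' H -> O H = Some i /\ O' H = Some j) /\
      (i \in H -> j \in H -> (O H = Some i <-> O' H = Some j)).

Definition flip_rel (HH : hypergraph) : relation orient :=
  fun O O' => acyclic_orientation HH O /\ acyclic_orientation HH O' /\
              increasing_flip HH O O'.

Definition hg_le (HH : hypergraph) : relation orient :=
  clos_refl_trans orient (flip_rel HH).

Definition hypergraphic_poset_is_lattice (HH : hypergraph) : Prop :=
  forall x y, acyclic_orientation HH x -> acyclic_orientation HH y ->
    (exists z, [/\ acyclic_orientation HH z, hg_le HH x z, hg_le HH y z &
        forall w, acyclic_orientation HH w -> hg_le HH x w -> hg_le HH y w ->
                  hg_le HH z w]) /\
    (exists z, [/\ acyclic_orientation HH z, hg_le HH z x, hg_le HH z y &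
        forall w, acyclic_orientation HH w -> hg_le HH w x -> hg_le HH w y ->
                  hg_le HH w z]).

End Hyper.

(* Main.v *)
Require Import Defs.
From mathcomp Require Import all_boot zify.
From Stdlib Require Import Relations Classical.
Set Implicit Arguments. Unset Strict Implicit. Unset Printing Implicit Defensive.

Section Work.
Variable n : nat.
Variable HH : {set {set 'I_n}}.
Hypothesis hint : interval_hypergraph HH.
Variable x0 : 'I_n.

Definition valid (m : {set 'I_n} -> 'I_n) := forall H, H \in HH -> m H \in H.
Definition pw (m : {set 'I_n} -> 'I_n) :=
  forall A B, A \in HH -> B \in HH -> m A \in B -> m B \in A -> m A = m B.
Definition cle (m m' : {set 'I_n} -> 'I_n) := forall H, H \in HH -> (m H <= m' H)%N.
Definition mkO (m : {set 'I_n} -> 'I_n) : orient n :=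
  [ffun H => if H \in HH then Some (m H) else None].
Definition ov (O : orient n) H := odflt x0 (O H).

Lemma conv H (u v w : 'I_n) : H \in HH -> u \in H -> w \in H -> (u <= v)%N -> (v <= w)%N -> v \in H.
Proof.
move=> /hint [i [j [_ ->]]]; rewrite !inE => /andP[iu _] /andP[_ wj] uv vw.
apply/andP; split; lia.
Qed.

Lemma mkO_in m H : H \in HH -> mkO m H = Some (m H).
Proof. by move=> h; rewrite ffunE h. Qed.

Lemma ov_mkO m H : H \in HH -> ov (mkO m) H = m H.
Proof. by move=> h; rewrite /ov mkO_in. Qed.

Lemma mkO_valid m : valid m -> is_orientation HH (mkO m).
Proof.
move=> vm H; split=> h; first by exists (m H); rewrite mkO_in // vm.
by rewrite ffunE (negbTE h).
Qed.

Lemma orient_mkO O : is_orientation HH O -> O = mkO (ov O) /\ valid (ov O).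
Proof.
move=> hO; split.
  apply/ffunP=> H; rewrite ffunE; case: (boolP (H \in HH)) => h.
    by case: (hO H) => [/(_ h) [v [e _]] _]; rewrite /ov e.
  by case: (hO H) => _ /(_ h).
move=> H h; case: (hO H) => [/(_ h) [v [e vH]] _]; by rewrite /ov e.
Qed.

Lemma per_mod k (g : nat -> {set 'I_n}) : (forall t, g (t + k) = g t) ->
  forall t, g t = g (t %% k).
Proof.
move=> per t; have -> : g t = g (t %/ k * k + t %% k) by rewrite -divn_eq.
elim: (t %/ k) => [|q IH]; first by rewrite mul0n add0n.
by rewrite mulSn -addnA addnC per.
Qed.

Lemma cyc_false m : valid m -> pw m -> forall k (g : nat -> {set 'I_n}),
  (forall t, g (t + k.+1) = g t) -> (forall t, g t \in HH) ->
  (forall t, m (g t.+1) \in g t /\ m (g t) <> m (g t.+1)) -> False.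
Proof.
move=> vm pm; elim=> [|k IH] g per inH st.
  by case: (st 0) => _; rewrite -[1]/(0 + 1) per.
have [t0 t0max] : exists t0 : 'I_k.+2, forall t, (m (g t) <= m (g t0))%N.
  case: (@arg_maxnP _ (ord0 : 'I_k.+2) xpredT (fun t => val (m (g t)))) => // i _ hi.
  exists i => t.
  rewrite (per_mod per t); have ht : (t %% k.+2 < k.+2)%N by rewrite ltn_mod.
  exact: (hi (Ordinal ht)).
pose P := g (t0 + k.+1); pose Mx := g t0; pose S := g t0.+1.
have PM : m Mx \in P /\ m P <> m Mx.
  by have := st (t0 + k.+1); rewrite -addnS per.
have MS : m S \in Mx /\ m Mx <> m S by apply: st.
have PS : m S \in P /\ m P <> m S.
  case: PM => MP nPM; case: MS => SM nMS.
  have lP : (m P < m Mx)%N.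
    rewrite ltn_neqAle t0max andbT; apply/eqP => e; apply: nPM; exact: val_inj.
  have lS : (m S < m Mx)%N.
    rewrite ltn_neqAle t0max andbT; apply/eqP => e; apply: nMS; apply/eqP; by rewrite -val_eqE /= e.
  have PnM : m P \notin Mx.
    apply/negP => h; apply: nPM; exact: (pm _ _ (inH _) (inH _) h MP).
  have SP : (m P < m S)%N.
    rewrite ltnNge; apply/negP => h; move/negP: PnM; apply.
    by apply: (conv (inH _) SM (vm _ (inH _))) => //; exact: ltnW.
  split.
    by apply: (conv (inH _) (vm _ (inH _)) MP); exact: ltnW.
  by move=> e; move: SP; rewrite e ltnn.
pose h t := g (t %% k.+1 + t0.+1).
apply: (IH h).
- by move=> t; rewrite /h modnDr.
- by move=> t; apply: inH.
move=> t; rewrite /h.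
have := ltn_mod t k.+1; rewrite ltnS leq_eqVlt => /orP[/eqP e|lt].
  have -> : t.+1 %% k.+1 = 0.
    by rewrite -[t.+1]addn1 -modnDml e addn1 modnn.
  rewrite e add0n; have -> : k + t0.+1 = t0 + k.+1 by rewrite !addnS addnC.
  exact: PS.
have -> : t.+1 %% k.+1 = (t %% k.+1).+1.
  by rewrite -[t.+1]addn1 -modnDml addn1 modn_small // ltnS.
by rewrite addSn; apply: st.
Qed.

Lemma pw_acyc m : valid m -> pw m -> acyclic_orientation HH (mkO m).
Proof.
move=> vm pm; split; first exact: mkO_valid.
case=> k [f [k2 [inH st]]].
case: k k2 inH st => [|[|k]] // _ inH st.
pose g t := f (t %% k.+2).
apply: (@cyc_false m vm pm k.+1 g).
- by move=> t; rewrite /g modnDr.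
- by move=> t; apply: inH; rewrite ltn_mod.
move=> t; rewrite /g.
have ht : (t %% k.+2 < k.+2)%N by rewrite ltn_mod.
have [v [e [vin ne]]] := st _ ht.
have e2 : (t %% k.+2).+1 %% k.+2 = t.+1 %% k.+2 by rewrite -[(t %% k.+2).+1]addn1 -[t.+1]addn1 modnDml.
rewrite e2 in e.
rewrite mkO_in in e; last by apply: inH; rewrite ltn_mod.
case: e => ->; split => // e'; apply: ne; rewrite mkO_in ?e' //; exact: inH.
Qed.

Lemma acyc_pw O : acyclic_orientation HH O -> pw (ov O).
Proof.
case=> hO nc A B hA hB AB BA; apply/eqP/negP => ne; apply: nc.
have [eO vO] := orient_mkO hO.
have eA : O A = Some (ov O A) by rewrite {1}eO mkO_in.
have eB : O B = Some (ov O B) by rewrite {1}eO mkO_in.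
exists 2, (fun t => if t == 0 then A else B); split => //; split.
  by case=> [|[|]].
case=> [|[|]] // _ /=.
  exists (ov O B); rewrite eB; split => //; split => //.
  by rewrite eA => -[e]; move: ne; rewrite e eqxx.
exists (ov O A); rewrite eA; split => //; split => //.
by rewrite eB => -[e]; move: ne; rewrite e eqxx.
Qed.

Lemma oeq (a b : 'I_n) : (a = b) <-> (val a = val b).
Proof. by split=> [->//|]; apply: val_inj. Qed.

Lemma hg_cle O O' : hg_le HH O O' -> cle (ov O) (ov O').
Proof.
elim=> {O O'} [O O' [_ [_ [ne [i [j [ij hf]]]]]] | O | O1 O2 O3 _ h1 _ h2] H hH.
- case: (hf H hH) => h _; rewrite /ov; case: (O H =P O' H) => [e|/h [-> ->]]; first by rewrite e.
  exact: ltnW.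
- by [].
- exact: leq_trans (h1 H hH) (h2 H hH).
Qed.

Lemma cle_hg m m' : valid m -> pw m -> valid m' -> pw m' -> cle m m' ->
  hg_le HH (mkO m) (mkO m').
Proof.
move: {2}(\sum_(H in HH) (m' H - m H)) (erefl (\sum_(H in HH) (m' H - m H))) => N.
elim/ltn_ind: N m => N IH m hN vm pm vm' pm' c.
case: (boolP [forall H in HH, m H == m' H]) => [/forall_inP alleq|].
  have -> : mkO m = mkO m'.
    apply/ffunP=> H; rewrite !ffunE; case: ifP => // hH; by rewrite (eqP (alleq H hH)).
  exact: rt_refl.
rewrite negb_forall_in => /exists_inP [Hd hd ned].
pose D := [pred H | (H \in HH) && (m H < m' H)%N].
have Dd : D Hd by rewrite /= hd ltn_neqAle val_eqE ned c.
case: (@arg_maxnP _ Hd D (fun H => val (m H)) Dd) => H1 DH1 maxi.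
have hD : forall H, H \in HH -> (m H < m' H)%N -> (m H <= m H1)%N.
  by move=> H hH lt; apply: maxi; rewrite /= hH.
case: (@arg_maxnP _ H1 [pred H | D H && (m H == m H1)] (fun H => val (m' H)));
  first by rewrite /= eqxx andbT; exact: DH1.
move=> H0 /andP[/andP[hH0 lt0] /eqP mH0] maxj.
have [i ei] : exists i, m H1 = i by exists (m H1).
rewrite ei in mH0 maxj hD.
have hDj : forall H, H \in HH -> (m H < m' H)%N -> m H = i -> (m' H <= m' H0)%N.
  by move=> H hH lt e; apply: maxj; rewrite /= hH lt e eqxx.
clear maxj; have [j ej] : exists j, m' H0 = j by exists (m' H0).
rewrite ej in hDj; rewrite ej mH0 in lt0.
have iH0 : i \in H0 by rewrite -mH0 vm.
have jH0 : j \in H0 by rewrite -ej vm'.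
have nb : forall H, H \in HH -> i \in H -> j \in H -> m H != j.
  move=> H hH iH jH; apply/eqP => e.
  have := pm H H0 hH hH0; rewrite e mH0 => /(_ jH0 iH) e2; move: lt0; rewrite e2 ltnn //.
have aj : forall H, H \in HH -> i \in H -> j \in H -> m H = i -> m' H = j.
  move=> H hH iH jH e.
  have cH := c H hH.
  case: (ltnP (m H) (m' H)) => lt; last first.
    have e2 : m' H = i by apply/oeq; rewrite -e; apply/eqP; rewrite eqn_leq lt cH.
    have := pm' H H0 hH hH0; rewrite e2 ej => /(_ iH0 jH) e3; move: lt0; rewrite e3 ltnn //.
  have le := hDj H hH lt e.
  case: (ltnP (m' H) j) => lt2; last by apply/oeq; apply/eqP; rewrite eqn_leq le lt2.
  have inH0 : m' H \in H0 by apply: (conv hH0 iH0 jH0); [rewrite -e; exact: ltnW | exact: ltnW].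
  have := pm' H H0 hH hH0 inH0; rewrite ej => /(_ jH) e3; move: lt2; rewrite e3 ltnn //.
pose m2 := fun H : {set 'I_n} => if (i \in H) && (j \in H) && (m H == i) then j else m H.
have m2H0 : m2 H0 = j by rewrite /m2 iH0 jH0 mH0 eqxx.
have vm2 : valid m2.
  by move=> H hH; rewrite /m2; case: ifP => [/andP[/andP[_ ->]] _ //|_]; apply: vm.
have c2 : cle m2 m'.
  move=> H hH; rewrite /m2; case: ifP => [/andP[/andP[iH jH] /eqP e]|_]; last exact: c.
  by rewrite (aj H hH iH jH e).
have mix : forall A B, A \in HH -> B \in HH -> i \in A -> j \in A -> m A = i ->
    ~~ ((i \in B) && (j \in B) && (m B == i)) -> j \in B -> m B \in A -> j = m B.
  move=> A B hA hB iA jA eA nB jB mBA; apply/eqP/negP => ne.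
  case: (boolP (i \in B)) => iB.
    move: nB; rewrite iB jB /= => nB.
    have := pm A B hA hB; rewrite eA => /(_ iB mBA) e; move: nB; rewrite -e eqxx //.
  have qi : (i < m B)%N.
    rewrite ltnNge; apply/negP => le; move/negP: iB; apply.
    apply: (conv hB (vm B hB) jB le); exact: ltnW.
  have eB : m' B = m B.
    case: (ltnP (m B) (m' B)) => lt; first by have := hD B hB lt; rewrite leqNgt qi.
    by apply/oeq; apply/eqP; rewrite eqn_leq lt c.
  have := pm' A B hA hB; rewrite (aj A hA iA jA eA) eB => /(_ jB mBA) e.
  by move: ne; rewrite e eqxx.
have pm2 : pw m2.
  move=> A B hA hB; rewrite /m2.
  case: ifP => [/andP[/andP[iA jA] /eqP eA]|nA]; case: ifP => [/andP[/andP[iB jB] /eqP eB]|nB] //.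
  - by move=> jB mBA; apply: (mix A B) => //; apply: negbT.
  - by move=> mAB jA; apply/esym/(mix B A) => //; apply: negbT.
  - exact: pm.
have fl : increasing_flip HH (mkO m) (mkO m2).
  split.
    move=> e; have := congr1 (fun O : orient n => O H0) e; rewrite /= !mkO_in // m2H0 mH0.
    by case=> e2; move: lt0; rewrite e2 ltnn.
  exists i, j; split => // H hH; rewrite !mkO_in // /m2.
  case: ifP => [/andP[/andP[iH jH] /eqP e]|nc].
    by rewrite e; split.
  split; first by case.
  move=> iH jH; split; first by case=> e; move: nc; rewrite iH jH e eqxx.
  by case=> e; move: (nb H hH iH jH); rewrite e eqxx.
apply: (@rt_trans _ _ _ (mkO m2)).
  apply: rt_step; split; first exact: pw_acyc.
  split; first exact: pw_acyc.
  exact: fl.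
apply: (IH (\sum_(H in HH) (m' H - m2 H))) => //.
rewrite -hN (bigD1 H0) //= [X in (_ < X)%N](bigD1 H0) //= m2H0 ej subnn add0n.
have S : (\sum_(H in HH | H != H0) (m' H - m2 H) <= \sum_(H in HH | H != H0) (m' H - m H))%N.
  apply: leq_sum => H /andP[hH _]; apply: leq_sub2l; rewrite /m2.
  by case: ifP => [/andP[_ /eqP ->]|//]; apply: ltnW.
rewrite mH0 -add1n; apply: leq_add; [by rewrite subn_gt0 | exact: S].
Qed.

Definition her (m : {set 'I_n} -> 'I_n) :=
  forall H K, H \in HH -> K \in HH -> K \subset H -> m H \in K -> m K = m H.

Lemma pw_her m : valid m -> pw m -> her m.
Proof.
move=> vm pm H K hH hK sKH mHK; apply/esym/pm => //.
exact: (subsetP sKH) (vm K hK).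
Qed.

Lemma her_pw m : closed_under_intersection HH -> valid m -> her m -> pw m.
Proof.
move=> cl vm hm A B hA hB mAB mBA.
have ne : A :&: B != set0.
  by apply/set0Pn; exists (m A); rewrite inE vm.
have hL := cl A B hA hB ne.
have e1 := hm A (A :&: B) hA hL (subsetIl _ _) (ltac:(by rewrite inE vm)).
have e2 := hm B (A :&: B) hB hL (subsetIr _ _) (ltac:(by rewrite inE mBA vm)).
by rewrite -e1 e2.
Qed.

Definition Pinv (m : {set 'I_n} -> 'I_n) :=
  forall H K, H \in HH -> K \in HH -> K \subset H -> m H \in K -> (m H <= m K)%N.

Definition best (m : {set 'I_n} -> 'I_n) H :=
  [arg max_(K > H | (K \in HH) && (K \subset H) && (m H \in K)) val (m K)].

Lemma best_spec m H : valid m -> H \in HH ->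
  [/\ best m H \in HH, best m H \subset H, m H \in best m H &
   forall K, K \in HH -> K \subset H -> m H \in K -> (m K <= m (best m H))%N].
Proof.
move=> vm hH; rewrite /best.
case: arg_maxnP; first by rewrite hH subxx vm.
move=> K /andP[/andP[hK sK] mK] mx; split => // K' hK' sK' mK'.
by apply: mx; rewrite hK' sK' mK'.
Qed.

Lemma join_cle : closed_under_intersection HH -> forall mx my,
  valid mx -> pw mx -> valid my -> pw my ->
  exists mz, [/\ valid mz, pw mz, cle mx mz, cle my mz &
    forall mw, valid mw -> pw mw -> cle mx mw -> cle my mw -> cle mz mw].
Proof.
move=> cl mx my vx px vy py.
have hx := pw_her vx px; have hy := pw_her vy py.
suff: forall N (m : {set 'I_n} -> 'I_n), \sum_(H in HH) (n - m H) = N -> valid m -> Pinv m -> cle mx m -> cle my m ->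
   (forall mw, valid mw -> pw mw -> cle mx mw -> cle my mw -> cle m mw) ->
  exists mz, [/\ valid mz, pw mz, cle mx mz, cle my mz &
    forall mw, valid mw -> pw mw -> cle mx mw -> cle my mw -> cle mz mw].
  pose m0 := fun H : {set 'I_n} => if (mx H < my H)%N then my H else mx H.
  move/(_ _ m0 (erefl _)); apply.
  - by move=> H hH; rewrite /m0; case: ifP => _; [apply: vy | apply: vx].
  - move=> H K hH hK sKH; rewrite /m0; case: ifP => lt mHK.
      rewrite (hy H K hH hK sKH mHK); case: ifP => //; lia.
    rewrite (hx H K hH hK sKH mHK); case: ifP => //; lia.
  - by move=> H hH; rewrite /m0; case: ifP => //; lia.
  - by move=> H hH; rewrite /m0; case: ifP => //; lia.
  - move=> mw vw pw' cx cy H hH; rewrite /m0; case: ifP => _; [exact: cy | exact: cx].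
elim/ltn_ind => N IH m hN vm Pm cx cy lst.
case: (boolP [forall H in HH, forall K in HH, (K \subset H) ==> (m H \in K) ==> (m K == m H)]).
  move=> /forall_inP hb; exists m; split => //.
  apply: her_pw => // H K hH hK sKH mHK.
  by have /forall_inP/(_ K hK) := hb H hH; rewrite sKH mHK => /eqP.
rewrite negb_forall_in => /exists_inP [H hH]; rewrite negb_forall_in => /exists_inP [K hK].
rewrite negb_imply => /andP [sKH]; rewrite negb_imply => /andP [mHK neK].
pose Fm := fun H => m (best m H).
have geF : forall H, H \in HH -> (m H <= Fm H)%N.
  move=> H' hH'; case: (best_spec vm hH') => _ _ _ mx'.
  by apply: mx' => //; rewrite ?subxx ?vm.
apply: (IH (\sum_(H in HH) (n - Fm H))) => //.
- rewrite -hN (bigD1 H) //= [X in (_ < X)%N](bigD1 H) //=.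
  have S : (\sum_(H0 in HH | H0 != H) (n - Fm H0) <= \sum_(H0 in HH | H0 != H) (n - m H0))%N.
    by apply: leq_sum => H0 /andP[hH0 _]; apply: leq_sub2l; apply: geF.
  have lt : (m H < Fm H)%N.
    case: (best_spec vm hH) => _ _ _ mx'.
    have := mx' K hK sKH mHK; have := Pm H K hH hK sKH mHK.
    move: neK; rewrite -val_eqE /Fm /=; lia.
  have h1 : (n - Fm H < n - m H)%N by move: lt; have := ltn_ord (Fm H); lia.
  by rewrite -addSn; apply: leq_add.
- move=> H' hH'; case: (best_spec vm hH') => hb sb _ _.
  exact: (subsetP sb) (vm _ hb).
- move=> H1 K1 hH1 hK1 sK1 FK1.
  case: (best_spec vm hH1) => hK0 sK0 mH1K0 mx0.
  case: (best_spec vm hK1) => hB sB mK1B mx1.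
  rewrite /Fm in FK1 *.
  have geK1 := geF K1 hK1; rewrite /Fm in geK1.
  move: (best m H1) hK0 sK0 mH1K0 mx0 FK1 => K0 hK0 sK0 mH1K0 mx0 FK1.
  move: (best m K1) hB sB mK1B mx1 geK1 => B hB sB mK1B mx1 geK1.
  have vK0 : m K0 \in K0 by apply: vm.
  case: (boolP (m K1 \in K0)) => mK1K0.
    have neL : K1 :&: K0 != set0 by apply/set0Pn; exists (m K0); rewrite inE FK1 vK0.
    have hL := cl _ _ hK1 hK0 neL.
    have i1 : m K1 \in K1 :&: K0 by rewrite inE mK1K0 (vm _ hK1).
    have i2 : m K0 \in K1 :&: K0 by rewrite inE FK1 vK0.
    have := mx1 _ hL (subsetIl _ _) i1.
    have := Pm _ _ hK0 hL (subsetIr _ _) i2.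
    by move=> a b; exact: leq_trans a b.
  case: (ltnP (m K0) (m K1)) => lt; first by apply: leq_trans (ltnW lt) geK1.
  have hm1 := Pm _ _ hH1 hK0 sK0 mH1K0.
  case: (ltnP (m K1) (m H1)) => lt2; last first.
    by move/negP: mK1K0; case; apply: (conv hK0 mH1K0 vK0).
  have mH1K1 : m H1 \in K1.
    by apply: (conv hK1 (vm _ hK1) FK1); [exact: ltnW | exact: hm1].
  by have := Pm _ _ hH1 hK1 sK1 mH1K1; rewrite leqNgt lt2.
- move=> H' hH'; apply: leq_trans (cx H' hH') (geF H' hH').
- move=> H' hH'; apply: leq_trans (cy H' hH') (geF H' hH').
- move=> mw vw pw' cxw cyw H' hH'.
  have hw := pw_her vw pw'; have cm := lst mw vw pw' cxw cyw.
  case: (best_spec vm hH') => hK0 sK0 mK0 _; rewrite /Fm.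
  case: (boolP (mw H' \in best m H')) => wK.
    rewrite -(hw _ _ hH' hK0 sK0 wK); exact: cm.
  rewrite leqNgt; apply/negP => lt; move/negP: wK; apply.
  by apply: (conv hK0 mK0 (vm _ hK0)); [exact: cm | exact: ltnW].
Qed.

Definition lo (H : {set 'I_n}) := odflt x0 [pick v in H | [forall u in H, (v <= u)%N]].
Definition hi (H : {set 'I_n}) := odflt x0 [pick v in H | [forall u in H, (u <= v)%N]].

Lemma lo_int (i j : 'I_n) : (i <= j)%N -> lo (interval i j) = i.
Proof.
move=> ij; rewrite /lo; case: pickP => [v /andP[vH /forall_inP hv]|none] /=.
  have := hv i; rewrite !inE leqnn ij => /(_ isT) vi.
  by move: vH; rewrite inE => /andP[iv _]; apply/val_inj/eqP; rewrite eqn_leq vi iv.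
have := none i; rewrite !inE leqnn ij /=.
suff -> : [forall (u | u \in interval i j), (i <= u)%N] by [].
by apply/forall_inP => u; rewrite inE => /andP[].
Qed.

Lemma hi_int (i j : 'I_n) : (i <= j)%N -> hi (interval i j) = j.
Proof.
move=> ij; rewrite /hi; case: pickP => [v /andP[vH /forall_inP hv]|none] /=.
  have := hv j; rewrite !inE leqnn ij => /(_ isT) vi.
  by move: vH; rewrite inE => /andP[_ iv]; apply/val_inj/eqP; rewrite eqn_leq vi iv.
have := none j; rewrite !inE leqnn ij /=.
suff -> : [forall (u | u \in interval i j), (u <= j)%N] by [].
by apply/forall_inP => u; rewrite inE => /andP[].
Qed.

Lemma cle_trans m1 m2 m3 : cle m1 m2 -> cle m2 m3 -> cle m1 m3.
Proof. by move=> a b H hH; apply: leq_trans (a H hH) (b H hH). Qed.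

Lemma hg_iff O O' : acyclic_orientation HH O -> acyclic_orientation HH O' ->
  hg_le HH O O' <-> cle (ov O) (ov O').
Proof.
move=> aO aO'; split; first exact: hg_cle.
have [eO vO] := orient_mkO aO.1; have [eO' vO'] := orient_mkO aO'.1.
move=> c; have := cle_hg vO (acyc_pw aO) vO' (acyc_pw aO') c.
by rewrite -eO -eO'.
Qed.

Lemma lo_valid : valid lo.
Proof. by move=> H /hint [i [j [ij ->]]]; rewrite lo_int // inE leqnn ij. Qed.

Lemma lo_pw : pw lo.
Proof.
move=> A B /hint [i1 [j1 [ij1 ->]]] /hint [i2 [j2 [ij2 ->]]].
rewrite !lo_int // !inE => h1 h2; apply/val_inj => /=; lia.
Qed.

Lemma lo_least mw : valid mw -> cle lo mw.
Proof.
move=> vw H hH; have := vw H hH; move: hH => /hint [i [j [ij ->]]].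
by rewrite lo_int // inE => /andP[].
Qed.

Lemma fold_join (cl : closed_under_intersection HH) (Q : orient n -> Prop) :
  (forall O, Q O -> acyclic_orientation HH O) -> forall s : seq (orient n),
  exists mz, [/\ valid mz, pw mz, (forall O, O \in s -> Q O -> cle (ov O) mz) &
    forall mw, valid mw -> pw mw -> (forall O, O \in s -> Q O -> cle (ov O) mw) -> cle mz mw].
Proof.
move=> hQ; elim=> [|a s [mz [vz pz uz lz]]].
  exists lo; split; [exact: lo_valid | exact: lo_pw | by [] | move=> mw vw _ _; exact: lo_least].
case: (classic (Q a)) => qa; last first.
  exists mz; split => //.
    by move=> O; rewrite inE => /orP[/eqP -> //|]; apply: uz.
  by move=> mw vw pw' h; apply: lz => // O Os; apply: h; rewrite inE Os orbT.
have aa := hQ a qa; have [_ va] := orient_mkO aa.1.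
have [mz' [vz' pz' c1 c2 l']] := join_cle cl va (acyc_pw aa) vz pz.
exists mz'; split => //.
  move=> O; rewrite inE => /orP[/eqP -> //|Os qO].
  exact: cle_trans (uz O Os qO) c2.
move=> mw vw pw' h; apply: l' => //.
  by apply: h; rewrite ?inE ?eqxx.
by apply: lz => // O Os; apply: h; rewrite inE Os orbT.
Qed.

Lemma closed_lattice : closed_under_intersection HH -> hypergraphic_poset_is_lattice HH.
Proof.
move=> cl x y ax ay.
have [_ vx] := orient_mkO ax.1; have [_ vy] := orient_mkO ay.1.
split.
  have [mz [vz pz cxz cyz lz]] := join_cle cl vx (acyc_pw ax) vy (acyc_pw ay).
  have az := pw_acyc vz pz.
  exists (mkO mz); split => //.
  - by rewrite hg_iff // => H hH; rewrite ov_mkO // cxz.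
  - by rewrite hg_iff // => H hH; rewrite ov_mkO // cyz.
  move=> w aw; rewrite !hg_iff // => h1 h2 H hH; rewrite ov_mkO //.
  have [_ vw] := orient_mkO aw.1.
  by apply: lz => //; apply: acyc_pw.
pose Q := fun O => acyclic_orientation HH O /\ cle (ov O) (ov x) /\ cle (ov O) (ov y).
have [mz [vz pz uz lz]] := @fold_join cl Q (fun O q => q.1) (enum (orient n)).
have az := pw_acyc vz pz.
exists (mkO mz); split => //.
- rewrite hg_iff // => H hH; rewrite ov_mkO //; move: H hH; apply: lz => //; first exact: acyc_pw.
  by move=> O _ [_ []].
- rewrite hg_iff // => H hH; rewrite ov_mkO //; move: H hH; apply: lz => //; first exact: acyc_pw.
  by move=> O _ [_ []].
move=> w aw; rewrite !hg_iff // => h1 h2 H hH; rewrite ov_mkO //.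
by apply: uz => //; rewrite mem_enum.
Qed.

Ltac crush := repeat (case: ifP => ?); move=> *; try (apply/val_inj => /=); lia.

Lemma nolat (a b c d : 'I_n) : interval a b \in HH -> interval c d \in HH ->
  (a < c)%N -> (c < b)%N -> (b < d)%N -> interval c b \notin HH ->
  ~ hypergraphic_poset_is_lattice HH.
Proof.
move=> hI hJ ac cb bd hK lat.
pose xm := fun H : {set 'I_n} => if c \in H then c else lo H.
pose ym := fun H : {set 'I_n} => if (lo H < c)%N then lo H else if b \in H then b else lo H.
pose z1 := fun H : {set 'I_n} => if b \in H then b else hi H.
pose z2 := fun H : {set 'I_n} => if (b < hi H)%N then hi H else if c \in H then c else hi H.
have vx : valid xm.
  by move=> H /hint [i [j [ij ->]]]; rewrite /xm lo_int // !inE; crush.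
have vy : valid ym.
  by move=> H /hint [i [j [ij ->]]]; rewrite /ym lo_int // !inE; crush.
have v1 : valid z1.
  by move=> H /hint [i [j [ij ->]]]; rewrite /z1 hi_int // !inE; crush.
have v2 : valid z2.
  by move=> H /hint [i [j [ij ->]]]; rewrite /z2 hi_int // !inE; crush.
have px : pw xm.
  move=> A B /hint [i1 [j1 [ij1 ->]]] /hint [i2 [j2 [ij2 ->]]].
  by rewrite /xm !lo_int // !inE; crush.
have py : pw ym.
  move=> A B /hint [i1 [j1 [ij1 ->]]] /hint [i2 [j2 [ij2 ->]]].
  by rewrite /ym !lo_int // !inE; crush.
have p1 : pw z1.
  move=> A B /hint [i1 [j1 [ij1 ->]]] /hint [i2 [j2 [ij2 ->]]].
  by rewrite /z1 !hi_int // !inE; crush.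
have p2 : pw z2.
  move=> A B /hint [i1 [j1 [ij1 ->]]] /hint [i2 [j2 [ij2 ->]]].
  by rewrite /z2 !hi_int // !inE; crush.
have cx1 : cle xm z1.
  by move=> H /hint [i [j [ij ->]]]; rewrite /xm /z1 lo_int // hi_int // !inE; crush.
have cx2 : cle xm z2.
  by move=> H /hint [i [j [ij ->]]]; rewrite /xm /z2 lo_int // hi_int // !inE; crush.
have cy1 : cle ym z1.
  by move=> H /hint [i [j [ij ->]]]; rewrite /ym /z1 lo_int // hi_int // !inE; crush.
have cy2 : cle ym z2.
  move=> H hH; have := hH; move=> /hint [i [j [ij eH]]].
  have ne : ~~ ((i == c :> nat) && (j == b :> nat)).
    apply/negP => /andP[/eqP e1 /eqP e2].
    have ic : i = c by apply: val_inj.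
    have jb : j = b by apply: val_inj.
    by move/negP: hK; apply; rewrite -ic -jb -eH.
  by move: ne; rewrite eH /ym /z2 lo_int // hi_int // !inE; crush.
have ax := pw_acyc vx px; have ay := pw_acyc vy py.
have a1 := pw_acyc v1 p1; have a2 := pw_acyc v2 p2.
have ovm : forall m H, H \in HH -> ov (mkO m) H = m H by move=> m H; apply: ov_mkO.
have [[z [az hxz hyz lz]] _] := lat _ _ ax ay.
have hz1 : hg_le HH z (mkO z1).
  apply: lz => //; rewrite hg_iff // => H hH; rewrite !ovm //; [exact: cx1 | exact: cy1].
have hz2 : hg_le HH z (mkO z2).
  apply: lz => //; rewrite hg_iff // => H hH; rewrite !ovm //; [exact: cx2 | exact: cy2].
rewrite hg_iff // in hxz; rewrite hg_iff // in hyz.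
rewrite hg_iff // in hz1; rewrite hg_iff // in hz2.
have e1 : (ov z (interval a b) : nat) = c.
  have := hxz _ hI; have := hz2 _ hI; rewrite !ovm // /xm /z2 hi_int ?inE; last lia.
  crush.
have e2 : (ov z (interval c d) : nat) = b.
  have := hyz _ hJ; have := hz1 _ hJ; rewrite !ovm // /ym /z1 lo_int ?inE; last lia.
  crush.
have := acyc_pw az hI hJ.
have -> : ov z (interval a b) = c by apply: val_inj.
have -> : ov z (interval c d) = b by apply: val_inj.
rewrite !inE => /(_ ltac:(lia) ltac:(lia)) e; by move: cb; rewrite e ltnn.
Qed.

End Work.

Theorem theoremA (n : nat) (HH : {set {set 'I_n}}) :
  (0 < n)%N ->
  interval_hypergraph HH ->
  contains_singletons HH ->
  (hypergraphic_poset_is_lattice HH <-> closed_under_intersection HH).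
Proof.
move=> n0 hint hs; pose x0 := Ordinal n0.
split; last exact: (closed_lattice hint x0).
move=> lat I J hI hJ ne; apply/negPn/negP => nIJ.
have [a [b [ab eI]]] := hint I hI; have [c [d [cd eJ]]] := hint J hJ.
have nl := nolat hint x0.
case: (leqP a c) => ac.
  case: (leqP d b) => db.
    have e : I :&: J = J by apply/setP => v; rewrite eI eJ !inE; lia.
    by move: nIJ; rewrite e hJ.
  have [eac|ltac] : (a = c :> nat) \/ (a < c)%N by lia.
    have e : I :&: J = I by apply/setP => v; rewrite eI eJ !inE; lia.
    by move: nIJ; rewrite e hI.
  case: (ltnP b c) => bc.
    have e : I :&: J = set0 by apply/setP => v; rewrite eI eJ !inE; lia.
    by move: ne; rewrite e eqxx.
  have [ecb|ltcb] : (c = b :> nat) \/ (c < b)%N by lia.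
    have e : I :&: J = [set c] by apply/setP => v; rewrite eI eJ !inE -val_eqE /=; lia.
    by move: nIJ; rewrite e hs.
  have e : I :&: J = interval c b by apply/setP => v; rewrite eI eJ !inE; lia.
  apply: (nl a b c d) => //; rewrite -?eI -?eJ -?e //.
case: (leqP b d) => bd.
  have e : I :&: J = I by apply/setP => v; rewrite eI eJ !inE; lia.
  by move: nIJ; rewrite e hI.
case: (ltnP d a) => da.
  have e : I :&: J = set0 by apply/setP => v; rewrite eI eJ !inE; lia.
  by move: ne; rewrite e eqxx.
have [ead|ltad] : (a = d :> nat) \/ (a < d)%N by lia.
  have e : I :&: J = [set a] by apply/setP => v; rewrite eI eJ !inE -val_eqE /=; lia.
  by move: nIJ; rewrite e hs.
have e : I :&: J = interval a d by apply/setP => v; rewrite eI eJ !inE; lia.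
apply: (nl c d a b) => //; rewrite -?eI -?eJ -?e //.
Qed.
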